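(* Let $(G,\mu,[R])$ be a random-predicate $k$-player projection game, let $n\geqslant1$ and $i,p\in[k]$. Then $\mathbf{val}(\mathcal{T}^i_p(G)^{\otimes n})\geqslant\mathbf{val}(G^{\otimes n})^2$.
   Context: A random-predicate $k$-player game $(G,\mu,[R])$ has finite question sets $\mathcal{X}_j$, finite answer sets $\mathcal{A}_j$, a distribution $\mu$ on $\mathcal{X}_1\times\cdots\times\mathcal{X}_k$, and predicates $V_r$, $r\in[R]$; the verifier samples $q\sim\mu$ and $r\in[R]$ uniformly and independently, player $j$ answers $\alpha^j(q|_j)$ ($q|_j$ the $j$-th coordinate), and accepts iff $V_r(q,\text{answers})=1$. It is a projection game if for every $q$ and $r$ there are $D\geqslant1$ and maps $\sigma^j:\mathcal{A}_j\to[D]$ with $V_r(q,(a^1,\dots,a^k))=1$ iff $\sigma^j(a^j)=\sigma^{j'}(a^{j'})$ for all $j\neq j'$. In $G^{\otimes n}$, pairs $(q_m,r_m)$, $m\in[n]$, are sampled independently, player $j$ receives the $j$-th coordinates of $q_1,\dots,q_n$ and answers via a function $\mathcal{X}_j^n\to\mathcal{A}_j^n$, and the verifier accepts iff $V_{r_m}$ accepts coordinate $m$ for every $m$; $\mathbf{val}$ is the maximum acceptance probability. The $i$-link distribution $L_i(G)$: sample $v\sim\mu|_i$, then $q,q'$ independently from $\mu$ conditioned on $q|_i=q'|_i=v$. For $q=(x^1,\dots,x^k)$, $q'=(y^1,\dots,y^k)$, $\Pi^p((q,q'))=(y^1,\dots,y^{p-1},x^p,y^{p+1},\dots,y^k)$.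 The game $\mathcal{T}^i_p(G)$: the verifier samples $(q,q')\sim L_i(G)$ and $r\in[R]$ uniformly and independently, sends the coordinates of $\Pi^p((q,q'))$ to the players, accepts by default if $q\neq q'$, and if $q=q'$ accepts the answers $a$ iff $V_r(q,a)=1$. In $\mathcal{T}^i_p(G)^{\otimes n}$ the triples $(q_m,q'_m,r_m)$, $m\in[n]$, are sampled independently, player $j$ receives the $j$-th coordinates of $\Pi^p((q_m,q'_m))$, $m\in[n]$, and the verifier accepts iff it accepts in every coordinate. *)

(* Defs.v *)
From HB Require Import structures.
From mathcomp Require Import all_boot all_order all_algebra.
Set Implicit Arguments. Unset Strict Implicit. Unset Printing Implicit Defensive.
Import Order.TTheory GRing.Theory Num.Theory.
Local Open Scope ring_scope.

Section Games.
Variables (R : realFieldType) (k : nat) (X A : 'I_k -> finType).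

Definition qtype := {dffun forall j : 'I_k, X j}.
Definition atype := {dffun forall j : 'I_k, A j}.

Definition is_projection (Rn : nat) (V : 'I_Rn -> qtype -> atype -> bool) : Prop :=
  forall (q : qtype) (r : 'I_Rn), exists (D : nat), (1 <= D)%N /\
    exists sigma : forall j : 'I_k, A j -> 'I_D,
      forall a : atype, V r q a = true <-> (forall j j', j != j' -> sigma j (a j) = sigma j' (a j')).

(* A general (one-shot) game: a finite sample space Om with probability weights pi,
   the question tuple qs w sent to the players, and the acceptance predicate acc w. *)

Definition nstrat (n : nat) :=
  {dffun forall j : 'I_k, {ffun n.-tuple (X j) -> n.-tuple (A j)}}.

Definition nanswers (Om : finType) (qs : Om -> qtype) (n : nat) (s : nstrat n)
    (w : n.-tuple Om) (m : 'I_n) : atype :=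
  [ffun j => tnth (s j [tuple (qs (tnth w m')) j | m' < n]) m].

Definition nacc (Om : finType) (pi : Om -> R) (qs : Om -> qtype)
    (acc : Om -> atype -> bool) (n : nat) (s : nstrat n) : R :=
  \sum_(w : n.-tuple Om) (\prod_(m < n) pi (tnth w m)) *
     (if [forall m : 'I_n, acc (tnth w m) (nanswers qs s w m)] then 1 else 0).

Definition nval (Om : finType) (pi : Om -> R) (qs : Om -> qtype)
    (acc : Om -> atype -> bool) (n : nat) : R :=
  \big[Num.max/0]_(s : nstrat n) nacc pi qs acc s.

(* The random-predicate game (G, mu, [Rn]): sample (q, r), send q, accept iff V_r(q, a). *)
Definition G_pi (mu : qtype -> R) (Rn : nat) (w : qtype * 'I_Rn) : R := mu w.1 / Rn%:R.
Definition G_qs (Rn : nat) (w : qtype * 'I_Rn) : qtype := w.1.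
Definition G_acc (Rn : nat) (V : 'I_Rn -> qtype -> atype -> bool)
  (w : qtype * 'I_Rn) (a : atype) : bool := V w.2 w.1 a.

Definition val_Gn (mu : qtype -> R) (Rn : nat) (V : 'I_Rn -> qtype -> atype -> bool) (n : nat) : R :=
  nval (G_pi mu (Rn:=Rn)) (@G_qs Rn) (G_acc V) n.

Definition marg (mu : qtype -> R) (i : 'I_k) (v : X i) : R :=
  \sum_(q : qtype | q i == v) mu q.
Definition cond (mu : qtype -> R) (i : 'I_k) (v : X i) (q : qtype) : R :=
  if q i == v then mu q / marg mu v else 0.

Definition link (mu : qtype -> R) (i : 'I_k) (q q' : qtype) : R :=
  \sum_(v : X i) marg mu v * cond mu v q * cond mu v q'.

Definition Pi (p : 'I_k) (q q' : qtype) : qtype :=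
  [ffun j => if j == p then q j else q' j].

Definition T_pi (mu : qtype -> R) (i : 'I_k) (Rn : nat) (w : qtype * qtype * 'I_Rn) : R :=
  link mu i w.1.1 w.1.2 / Rn%:R.
Definition T_qs (p : 'I_k) (Rn : nat) (w : qtype * qtype * 'I_Rn) : qtype := Pi p w.1.1 w.1.2.
Definition T_acc (Rn : nat) (V : 'I_Rn -> qtype -> atype -> bool)
  (w : qtype * qtype * 'I_Rn) (a : atype) : bool :=
  (w.1.1 != w.1.2) || V w.2 w.1.1 a.

Definition val_Tn (mu : qtype -> R) (i p : 'I_k) (Rn : nat)
    (V : 'I_Rn -> qtype -> atype -> bool) (n : nat) : R :=
  nval (T_pi mu i (Rn:=Rn)) (@T_qs p Rn) (T_acc V) n.

End Games.

(* Main.v *)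
From HB Require Import structures.
Require Import Defs.
From mathcomp Require Import all_boot all_order all_algebra.
From mathcomp Require Import ring lra.
Set Implicit Arguments. Unset Strict Implicit. Unset Printing Implicit Defensive.
Import Order.TTheory GRing.Theory Num.Theory.
Local Open Scope ring_scope.

Definition tzip (A B : Type) n (a : n.-tuple A) (b : n.-tuple B) : n.-tuple (A * B) :=
  [tuple (tnth a m, tnth b m) | m < n].

Lemma tnth_tzip (A B : Type) n (a : n.-tuple A) (b : n.-tuple B) m :
  tnth (tzip a b) m = (tnth a m, tnth b m).
Proof. by rewrite tnth_mktuple. Qed.

Lemma sum_tuple_pair (R : nmodType) (A B : finType) n (F : n.-tuple (A * B) -> R) :
  \sum_(w : n.-tuple (A * B)) F w = \sum_(a : n.-tuple A) \sum_(b : n.-tuple B) F (tzip a b).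
Proof.
rewrite pair_big /=.
pose g (w : n.-tuple (A * B)) := ([tuple (tnth w m).1 | m < n], [tuple (tnth w m).2 | m < n]).
rewrite (reindex (fun p : n.-tuple A * n.-tuple B => tzip p.1 p.2)) //=.
apply: onW_bij; exists g.
  move=> [a b]; rewrite /g /=; congr pair; apply: eq_from_tnth => m;
  by rewrite !tnth_mktuple.
move=> w; apply: eq_from_tnth => m; rewrite /g tnth_tzip !tnth_mktuple.
by case: (tnth w m).
Qed.

Lemma prod_sum_tuple (R : comPzSemiRingType) (I : finType) n (F : 'I_n -> I -> R) :
  \prod_(m < n) \sum_(v : I) F m v = \sum_(t : n.-tuple I) \prod_(m < n) F m (tnth t m).
Proof.
rewrite bigA_distr_bigA /=.
rewrite (reindex (fun t : n.-tuple I => [ffun m => tnth t m])) //=.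
  by apply: eq_bigr => t _; apply: eq_bigr => m _; rewrite ffunE.
apply: onW_bij; exists (fun f : {ffun 'I_n -> I} => [tuple f m | m < n]).
  by move=> t; apply: eq_from_tnth => m; rewrite tnth_mktuple ffunE.
by move=> f; apply/ffunP => m; rewrite ffunE tnth_mktuple.
Qed.

Lemma jensen_sq (R : realFieldType) (I : finType) (w h : I -> R) :
  (forall j, 0 <= w j) -> \sum_j w j = 1 ->
  (\sum_j w j * h j) ^+ 2 <= \sum_j w j * h j ^+ 2.
Proof.
move=> w0 w1; set a := \sum_j w j * h j.
have : 0 <= \sum_j w j * (h j - a) ^+ 2.
  by apply: sumr_ge0 => j _; rewrite mulr_ge0 // sqr_ge0.
have -> : \sum_j w j * (h j - a) ^+ 2 =
   \sum_j w j * h j ^+ 2 - a *+ 2 * (\sum_j w j * h j) + a ^+ 2 * \sum_j w j.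
  have E j : w j * (h j - a) ^+ 2 = w j * h j ^+ 2 - (a *+ 2) * (w j * h j) + a ^+ 2 * w j.
    by ring.
  rewrite (eq_bigr _ (fun j _ => E j)) big_split /= sumrB -!mulr_sumr.
  done.
by rewrite w1 mulr1 -/a; lra.
Qed.

Lemma bigmax0_cases (R : realDomainType) (I : finType) (F : I -> R) :
  \big[Num.max/0]_(j : I) F j = 0 \/ exists j, \big[Num.max/0]_(j : I) F j = F j.
Proof.
apply: (big_ind (fun x => x = 0 \/ exists j, x = F j)); first by left.
- move=> x y Hx Hy; case: (leP x y) => _; [exact: Hy | exact: Hx].
- by move=> j _; right; exists j.
Qed.

Lemma le_bigmax0 (R : realDomainType) (I : finType) (F : I -> R) j :
  F j <= \big[Num.max/0]_(j : I) F j.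
Proof. by rewrite (bigD1 j) //= le_max lexx. Qed.

Lemma bigmax0_ge0 (R : realDomainType) (I : finType) (F : I -> R) :
  0 <= \big[Num.max/0]_(j : I) F j.
Proof.
by elim/big_rec: _ => // j x _ Hx; rewrite le_max Hx orbT.
Qed.

Definition qcol k (X : 'I_k -> finType) n (Q : n.-tuple (qtype X)) (j : 'I_k) : n.-tuple (X j) :=
  [tuple (tnth Q m) j | m < n].
Definition ansQ k (X A : 'I_k -> finType) n (s : nstrat X A n) (Q : n.-tuple (qtype X)) (m : 'I_n)
  : atype A := [ffun j => tnth (s j (qcol Q j)) m].
Definition Win k (X A : 'I_k -> finType) Rn (V : 'I_Rn -> qtype X -> atype A -> bool) n
  (s : nstrat X A n) (r : n.-tuple 'I_Rn) (Q : n.-tuple (qtype X)) : bool :=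
  [forall m, V (tnth r m) (tnth Q m) (ansQ s Q m)].
Definition hybA k (X A : 'I_k -> finType) n (p : 'I_k) (s : nstrat X A n)
  (Q Q' : n.-tuple (qtype X)) (m : 'I_n) : atype A :=
  [ffun j => tnth (s j [tuple (Pi p (tnth Q m') (tnth Q' m')) j | m' < n]) m].

Lemma key k (X A : 'I_k -> finType) Rn (V : 'I_Rn -> qtype X -> atype A -> bool)
  (Vproj : is_projection V) n (s : nstrat X A n) (i p : 'I_k) (r : n.-tuple 'I_Rn)
  (Q Q' : n.-tuple (qtype X)) :
  (forall m, tnth Q m i = tnth Q' m i) -> Win V s r Q -> Win V s r Q' ->
  [forall m, (tnth Q m != tnth Q' m) || V (tnth r m) (tnth Q m) (hybA p s Q Q' m)].
Proof.
move=> Hi WQ WQ'; apply/forallP => m; case: eqP => //= Eqm.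
have Ecol : qcol Q i = qcol Q' i.
  by apply: eq_from_tnth => m'; rewrite !tnth_mktuple Hi.
have [D [_ [sg Hsg]]] := Vproj (tnth Q m) (tnth r m).
move/forallP/(_ m): WQ => /Hsg WQm.
move/forallP/(_ m): WQ'; rewrite -Eqm => /Hsg WQ'm.
apply/Hsg.
suff Hc : forall j, sg j (hybA p s Q Q' m j) = sg i (ansQ s Q m i).
  by move=> j j' _; rewrite !Hc.
move=> j; rewrite /hybA ffunE.
case: (eqVneq j p) => [->|jp].
  have -> : [tuple (Pi p (tnth Q m') (tnth Q' m')) p | m' < n] = qcol Q p.
    by apply: eq_mktuple => m'; rewrite /Pi ffunE eqxx.
  case: (eqVneq p i) => [->|pi]; first by rewrite /ansQ ffunE.
  by have := WQm p i pi; rewrite /ansQ !ffunE.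
have -> : [tuple (Pi p (tnth Q m') (tnth Q' m')) j | m' < n] = qcol Q' j.
  by apply: eq_mktuple => m'; rewrite /Pi ffunE (negbTE jp).
have -> : sg i (ansQ s Q m i) = sg i (ansQ s Q' m i) by rewrite /ansQ !ffunE Ecol.
case: (eqVneq j i) => [->|ji]; first by rewrite /ansQ ffunE.
by have := WQ'm j i ji; rewrite /ansQ !ffunE.
Qed.

Lemma naccG_eq (R : realFieldType) k (X A : 'I_k -> finType) (mu : qtype X -> R) Rn
  (V : 'I_Rn -> qtype X -> atype A -> bool) n (s : nstrat X A n) :
  nacc (G_pi mu (Rn:=Rn)) (@G_qs k X Rn) (G_acc V) s =
  \sum_(r : n.-tuple 'I_Rn) \sum_(Q : n.-tuple (qtype X))
     (Rn%:R^-1 ^+ n) * (\prod_(m < n) mu (tnth Q m)) * (Win V s r Q)%:R.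
Proof.
rewrite /nacc sum_tuple_pair exchange_big /=; apply: eq_bigr => r _.
apply: eq_bigr => Q _.
under eq_bigr => m _ do rewrite /G_pi !tnth_tzip /=.
rewrite big_split /= prodr_const card_ord.
have -> : [forall m, G_acc V (tnth (tzip Q r) m) (nanswers (@G_qs k X Rn) s (tzip Q r) m)]
   = Win V s r Q.
  apply: eq_forallb => m; rewrite /G_acc !tnth_tzip /=; congr (V _ _ _).
  apply/ffunP => j; rewrite !ffunE; congr (tnth (s j _) m).
  by apply: eq_mktuple => m'; rewrite /G_qs !tnth_tzip.
by case: (Win V s r Q); rewrite /= ?mulr1 ?mulr0 // mulrC.
Qed.

Definition IndT k (X A : 'I_k -> finType) Rn (V : 'I_Rn -> qtype X -> atype A -> bool) n
  (p : 'I_k) (s : nstrat X A n) (r : n.-tuple 'I_Rn) (Q Q' : n.-tuple (qtype X)) : bool :=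
  [forall m, (tnth Q m != tnth Q' m) || V (tnth r m) (tnth Q m) (hybA p s Q Q' m)].

Lemma naccT_eq (R : realFieldType) k (X A : 'I_k -> finType) (mu : qtype X -> R) (i p : 'I_k) Rn
  (V : 'I_Rn -> qtype X -> atype A -> bool) n (s : nstrat X A n) :
  nacc (T_pi mu i (Rn:=Rn)) (@T_qs k X p Rn) (T_acc V) s =
  \sum_(r : n.-tuple 'I_Rn) \sum_(Q : n.-tuple (qtype X)) \sum_(Q' : n.-tuple (qtype X))
     (Rn%:R^-1 ^+ n) * (\prod_(m < n) link mu i (tnth Q m) (tnth Q' m)) * (IndT V p s r Q Q')%:R.
Proof.
rewrite /nacc sum_tuple_pair exchange_big /=; apply: eq_bigr => r _.
rewrite sum_tuple_pair; apply: eq_bigr => Q _; apply: eq_bigr => Q' _.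
under eq_bigr => m _ do rewrite /T_pi !tnth_tzip /=.
rewrite big_split /= prodr_const card_ord.
set w := tzip (tzip Q Q') r.
have -> : [forall m, T_acc V (tnth w m) (nanswers (@T_qs k X p Rn) s w m)]
   = IndT V p s r Q Q'.
  apply: eq_forallb => m; rewrite /T_acc /w !tnth_tzip /=; congr (_ || V _ _ _).
  apply/ffunP => j; rewrite !ffunE; congr (tnth (s j _) m).
  by apply: eq_mktuple => m'; rewrite /T_qs !tnth_tzip.
by case: (IndT V p s r Q Q'); rewrite /= ?mulr1 ?mulr0 // mulrC.
Qed.

Lemma marg_ge0 (R : realFieldType) k (X : 'I_k -> finType) (mu : qtype X -> R)
  (mu_ge0 : forall q, 0 <= mu q) i (v : X i) : 0 <= marg mu v.
Proof. by apply: sumr_ge0 => q _. Qed.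

Lemma cond_ge0 (R : realFieldType) k (X : 'I_k -> finType) (mu : qtype X -> R)
  (mu_ge0 : forall q, 0 <= mu q) i (v : X i) q : 0 <= cond mu v q.
Proof. by rewrite /cond; case: ifP => // _; rewrite divr_ge0 ?marg_ge0. Qed.

Lemma mu_decomp (R : realFieldType) k (X : 'I_k -> finType) (mu : qtype X -> R)
  (mu_ge0 : forall q, 0 <= mu q) i q : mu q = \sum_(v : X i) marg mu v * cond mu v q.
Proof.
rewrite (bigD1 (q i)) //= big1 ?addr0; last first.
  by move=> v /negbTE nv; rewrite /cond eq_sym nv mulr0.
rewrite /cond eqxx.
have [E|nz] := eqVneq (marg mu (q i)) 0; last by rewrite mulrC divfK.
rewrite E mul0r; apply/eqP; rewrite eq_le mu_ge0 andbT.
move: E; rewrite /marg (bigD1 q) //= => H.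
have : 0 <= \sum_(j : qtype X | (j i == q i) && (j != q)) mu j by apply: sumr_ge0.
lra.
Qed.

Lemma sum_marg (R : realFieldType) k (X : 'I_k -> finType) (mu : qtype X -> R)
  (mu_sum1 : \sum_q mu q = 1) i : \sum_(v : X i) marg mu v = 1.
Proof.
by rewrite -mu_sum1 (partition_big (fun q : qtype X => q i) xpredT).
Qed.

Definition Mw (R : realFieldType) k (X : 'I_k -> finType) (mu : qtype X -> R) i n
  (vt : n.-tuple (X i)) : R := \prod_(m < n) marg mu (tnth vt m).
Definition Cw (R : realFieldType) k (X : 'I_k -> finType) (mu : qtype X -> R) i n
  (vt : n.-tuple (X i)) (Q : n.-tuple (qtype X)) : R :=
  \prod_(m < n) cond mu (tnth vt m) (tnth Q m).

Lemma termwise (R : realFieldType) k (X A : 'I_k -> finType) (mu : qtype X -> R)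
  (mu_ge0 : forall q, 0 <= mu q) Rn (V : 'I_Rn -> qtype X -> atype A -> bool)
  (Vproj : is_projection V) n (s : nstrat X A n) (i p : 'I_k) (r : n.-tuple 'I_Rn)
  (vt : n.-tuple (X i)) (Q Q' : n.-tuple (qtype X)) :
  Mw mu vt * (Cw mu vt Q * (Win V s r Q)%:R) * (Cw mu vt Q' * (Win V s r Q')%:R)
  <= Mw mu vt * Cw mu vt Q * Cw mu vt Q' * (IndT V p s r Q Q')%:R.
Proof.
have M0 : 0 <= Mw mu vt by apply: prodr_ge0 => m _; apply: marg_ge0.
have C0 : forall Q, 0 <= Cw mu vt Q by move=> Q0; apply: prodr_ge0 => m _; apply: cond_ge0.
case Hall : [forall m, (tnth Q m i == tnth vt m) && (tnth Q' m i == tnth vt m)].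
  have Hi : forall m, tnth Q m i = tnth Q' m i.
    by move=> m; move/forallP/(_ m): Hall => /andP [/eqP -> /eqP ->].
  case WQ : (Win V s r Q); case WQ' : (Win V s r Q'); rewrite /= ?mulr0 ?mul0r ?mulr1;
    try by rewrite !mulr_ge0 // ?C0 ?(ler0n _ (IndT V p s r Q Q')).
  by rewrite /IndT (key Vproj p Hi WQ WQ') mulr1 ?mulrA.
move/negbT/forallPn: Hall => [m]; rewrite negb_and => Hm.
have CC : Cw mu vt Q * Cw mu vt Q' = 0.
  case/orP: Hm => Hm; [rewrite /Cw (bigD1 m) //= {1}/cond (negbTE Hm) mul0r mul0r //|].
  by rewrite /Cw [X in _ * X](bigD1 m) //= [cond mu (tnth vt m) (tnth Q' m)]/cond (negbTE Hm) mul0r mulr0.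
have -> : Mw mu vt * (Cw mu vt Q * (Win V s r Q)%:R) * (Cw mu vt Q' * (Win V s r Q')%:R)
  = Mw mu vt * (Cw mu vt Q * Cw mu vt Q') * ((Win V s r Q)%:R * (Win V s r Q')%:R) by ring.
have -> : Mw mu vt * Cw mu vt Q * Cw mu vt Q' * (IndT V p s r Q Q')%:R
  = Mw mu vt * (Cw mu vt Q * Cw mu vt Q') * (IndT V p s r Q Q')%:R by ring.
by rewrite CC !mulr0 !mul0r.
Qed.

Definition hw (R : realFieldType) k (X A : 'I_k -> finType) (mu : qtype X -> R) Rn
  (V : 'I_Rn -> qtype X -> atype A -> bool) n (s : nstrat X A n) i
  (r : n.-tuple 'I_Rn) (vt : n.-tuple (X i)) : R :=
  \sum_(Q : n.-tuple (qtype X)) Cw mu vt Q * (Win V s r Q)%:R.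

Lemma G_r (R : realFieldType) k (X A : 'I_k -> finType) (mu : qtype X -> R)
  (mu_ge0 : forall q, 0 <= mu q) Rn (V : 'I_Rn -> qtype X -> atype A -> bool)
  n (s : nstrat X A n) (i : 'I_k) (r : n.-tuple 'I_Rn) (rho : R) :
  \sum_(Q : n.-tuple (qtype X)) rho * (\prod_(m < n) mu (tnth Q m)) * (Win V s r Q)%:R
  = rho * \sum_(vt : n.-tuple (X i)) Mw mu vt * hw mu V s r vt.
Proof.
have E Q : \prod_(m < n) mu (tnth Q m) = \sum_(vt : n.-tuple (X i)) Mw mu vt * Cw mu vt Q.
  under eq_bigr => m _ do rewrite (mu_decomp mu_ge0 i).
  by rewrite prod_sum_tuple; apply: eq_bigr => vt _; rewrite /Mw /Cw -big_split.
transitivity (\sum_(Q : n.-tuple (qtype X)) \sum_(vt : n.-tuple (X i))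
     rho * (Mw mu vt * (Cw mu vt Q * (Win V s r Q)%:R))).
  apply: eq_bigr => Q _; rewrite E mulr_sumr mulr_suml; apply: eq_bigr => vt _; ring.
rewrite exchange_big mulr_sumr; apply: eq_bigr => vt _.
by rewrite /hw mulr_sumr mulr_sumr; apply: eq_bigr => Q _; ring.
Qed.

Lemma T_r (R : realFieldType) k (X A : 'I_k -> finType) (mu : qtype X -> R)
  (mu_ge0 : forall q, 0 <= mu q) Rn (V : 'I_Rn -> qtype X -> atype A -> bool)
  (Vproj : is_projection V) n (s : nstrat X A n) (i p : 'I_k) (r : n.-tuple 'I_Rn) (rho : R) :
  0 <= rho ->
  rho * \sum_(vt : n.-tuple (X i)) Mw mu vt * hw mu V s r vt ^+ 2 <=
  \sum_(Q : n.-tuple (qtype X)) \sum_(Q' : n.-tuple (qtype X))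
     rho * (\prod_(m < n) link mu i (tnth Q m) (tnth Q' m)) * (IndT V p s r Q Q')%:R.
Proof.
move=> rho0.
have E Q Q' : \prod_(m < n) link mu i (tnth Q m) (tnth Q' m) =
   \sum_(vt : n.-tuple (X i)) Mw mu vt * Cw mu vt Q * Cw mu vt Q'.
  rewrite /link prod_sum_tuple; apply: eq_bigr => vt _.
  by rewrite /Mw /Cw -!big_split.
have -> : rho * \sum_(vt : n.-tuple (X i)) Mw mu vt * hw mu V s r vt ^+ 2 =
  (\sum_(Q : n.-tuple (qtype X)) \sum_(Q' : n.-tuple (qtype X))
   \sum_(vt : n.-tuple (X i)) rho * (Mw mu vt * (Cw mu vt Q * (Win V s r Q)%:R) *
        (Cw mu vt Q' * (Win V s r Q')%:R))).
  transitivity (\sum_(vt : n.-tuple (X i)) \sum_(Q : n.-tuple (qtype X))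
     \sum_(Q' : n.-tuple (qtype X)) rho * (Mw mu vt * (Cw mu vt Q * (Win V s r Q)%:R) *
        (Cw mu vt Q' * (Win V s r Q')%:R))).
    rewrite mulr_sumr; apply: eq_bigr => vt _.
    rewrite /hw expr2 big_distrlr /= !mulr_sumr; apply: eq_bigr => Q _.
    rewrite !mulr_sumr; apply: eq_bigr => Q' _; ring.
  rewrite exchange_big; apply: eq_bigr => Q _; by rewrite exchange_big.
apply: ler_sum => Q _; apply: ler_sum => Q' _.
rewrite E mulr_sumr mulr_suml; apply: ler_sum => vt _.
rewrite -!mulrA; apply: ler_wpM2l => //.
have := termwise mu_ge0 Vproj s p r vt Q Q'.
by rewrite !mulrA.
Qed.

Lemma main_s (R : realFieldType) k (X A : 'I_k -> finType)
  (mu : qtype X -> R) (mu_ge0 : forall q, 0 <= mu q) (mu_sum1 : \sum_q mu q = 1)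
  (Rn : nat) (Rn_gt0 : (0 < Rn)%N) (V : 'I_Rn -> qtype X -> atype A -> bool)
  (Vproj : is_projection V) (n : nat) (i p : 'I_k) (s : nstrat X A n) :
  nacc (G_pi mu (Rn:=Rn)) (@G_qs k X Rn) (G_acc V) s ^+ 2 <=
  nacc (T_pi mu i (Rn:=Rn)) (@T_qs k X p Rn) (T_acc V) s.
Proof.
rewrite naccG_eq naccT_eq.
set rho := Rn%:R^-1 ^+ n.
have rho0 : 0 <= rho by rewrite exprn_ge0 // invr_ge0 ler0n.
have rho1 : \sum_(r : n.-tuple 'I_Rn) rho = 1.
  rewrite sumr_const card_tuple card_ord -mulr_natr natrX -exprMn mulVf ?expr1n //.
  by rewrite pnatr_eq0 -lt0n.
have M0 vt : 0 <= Mw mu vt by apply: prodr_ge0 => m _; apply: marg_ge0.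
have M1 : \sum_(vt : n.-tuple (X i)) Mw mu vt = 1.
  by rewrite /Mw -(prod_sum_tuple (fun _ (v : X i) => marg mu v)) big1 // => m _; apply: sum_marg.
under eq_bigr => r _ do rewrite (G_r mu_ge0 V s i r).
apply: le_trans (jensen_sq _ (fun=> rho0) rho1) _.
apply: ler_sum => r _.
apply: le_trans _ (T_r mu_ge0 Vproj s i p r rho0).
apply: ler_wpM2l => //.
exact: jensen_sq.
Qed.
Unset Implicit Arguments. Set Strict Implicit. Set Printing Implicit Defensive.

Theorem claim3p5 (R : realFieldType) (k : nat) (X A : 'I_k -> finType)
  (mu : qtype X -> R) (mu_ge0 : forall q, 0 <= mu q) (mu_sum1 : \sum_q mu q = 1)
  (Rn : nat) (Rn_gt0 : (0 < Rn)%N) (V : 'I_Rn -> qtype X -> atype A -> bool)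
  (Vproj : is_projection V) (n : nat) (n_gt0 : (1 <= n)%N) (i p : 'I_k) :
  val_Gn mu V n ^+ 2 <= val_Tn mu i p V n.
Proof.
rewrite /val_Gn /val_Tn /nval.
have [E|[s E]] := bigmax0_cases
  (fun s : nstrat X A n => nacc (G_pi mu (Rn:=Rn)) (@G_qs k X Rn) (G_acc V) s).
  by rewrite E expr2 mulr0; apply: bigmax0_ge0.
rewrite E; apply: le_trans (main_s mu_ge0 mu_sum1 Rn_gt0 Vproj i p s) _.
exact: (le_bigmax0 (fun s : nstrat X A n => nacc (T_pi mu i (Rn:=Rn)) (@T_qs k X p Rn) (T_acc V) s)).
Qed.
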